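(* Let $I$ be an open interval and $a_1,a_2\in I$ with $\cosh(a_1-a_2)\cos(a_1-a_2)\neq1$. Put $d:=a_1-a_2$, $C:=\cosh d$, $c:=\cos d$, $S:=\sinh d$, $s:=\sin d$, and $K:=2-2Cc$. Then for all $f\in\mathscr{C}^4(I)$ and $x\in I$, \[ \begin{aligned} K f(x)&=\Big(f(a_1)+\tfrac12\int_{a_1}^x(f^{(4)}-f)(t)\big(\sinh(a_1-t)-\sin(a_1-t)\big)dt\Big)\Big[(C-c)\big(\cosh(x-a_2)-\cos(x-a_2)\big)-(S+s)\big(\sinh(x-a_2)-\sin(x-a_2)\big)\Big]\\ &\quad+\Big(f'(a_1)+\tfrac12\int_{a_1}^x(f^{(4)}-f)(t)\big(\cosh(a_1-t)-\cos(a_1-t)\big)dt\Big)\Big[(C-c)\big(\sinh(x-a_2)-\sin(x-a_2)\big)-(S-s)\big(\cosh(x-a_2)-\cos(x-a_2)\big)\Big]\\ &\quad+\Big(f(a_2)+\tfrac12\int_{a_2}^x(f^{(4)}-f)(t)\big(\sinh(a_2-t)-\sin(a_2-t)\big)dt\Big)\Big[(C-c)\big(\cosh(x-a_1)-\cos(x-a_1)\big)+(S+s)\big(\sinh(x-a_1)-\sin(x-a_1)\big)\Big]\\ &\quad+\Big(f'(a_2)+\tfrac12\int_{a_2}^x(f^{(4)}-f)(t)\big(\cosh(a_2-t)-\cos(a_2-t)\big)dt\Big)\Big[(C-c)\big(\sinh(x-a_1)-\sin(x-a_1)\big)+(S-s)\big(\cosh(x-a_1)-\cos(x-a_1)\big)\Big].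 \end{aligned} \]
   Context: $\mathscr{C}^4(I)$ denotes the space of four times continuously differentiable complex-valued functions on $I$. *)

(* Defs.v *)
From Stdlib Require Export Reals.
From Coquelicot Require Export Coquelicot.

Definition in_open_interval (l u : Rbar) (x : R) : Prop :=
  Rbar_lt l x /\ Rbar_lt x u.

Definition C4_on (l u : Rbar) (f f1 f2 f3 f4 : R -> C) : Prop :=
  forall x, in_open_interval l u x ->
    is_derive f x (f1 x) /\ is_derive f1 x (f2 x) /\
    is_derive f2 x (f3 x) /\ is_derive f3 x (f4 x) /\ continuous f4 x.

Definition CInt (g : R -> C) (a b : R) : C :=
  @RInt C_R_CompleteNormedModule g a b.

(* Main.v *)
Require Import Defs.
From Stdlib Require Import Reals Lra.
From Coquelicot Require Import Coquelicot.
Open Scope R_scope.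

Lemma interval_between (l u : Rbar) a x t :
  in_open_interval l u a -> in_open_interval l u x ->
  Rmin a x <= t <= Rmax a x -> in_open_interval l u t.
Proof.
  intros [Ha1 Ha2] [Hx1 Hx2] Ht.
  assert (H : (a <= t <= x) \/ (x <= t <= a)).
  { destruct (Rle_dec a x).
    - rewrite Rmin_left, Rmax_right in Ht by lra. lra.
    - rewrite Rmin_right, Rmax_left in Ht by lra. lra. }
  split.
  - destruct l as [r| |]; simpl in *; try easy; lra.
  - destruct u as [r| |]; simpl in *; try easy; lra.
Qed.

Lemma is_derive_scal_fct' (k : R -> R) (F : R -> C) t k' F' :
  is_derive k t k' -> is_derive F t F' ->
  is_derive (fun t => @scal R_Ring C_R_ModuleSpace (k t) (F t)) t
     (plus (scal k' (F t)) (scal (k t) F')).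
Proof.
  intros Hk HF. unfold is_derive in *.
  eapply filterdiff_ext_lin.
  - apply (filterdiff_scal_fct t k F); [intros; apply Rmult_comm | exact Hk | exact HF].
  - intros y. simpl. rewrite scal_distr_l. rewrite !scal_assoc.
    f_equal. f_equal. unfold mult; simpl. apply Rmult_comm.
Qed.

Lemma is_derive_eq {V : NormedModule R_AbsRing} (f : R -> V) x l l' :
  is_derive f x l -> l = l' -> is_derive f x l'.
Proof. intros H ->; exact H. Qed.

Lemma scal_C (r : R) (z : C) : @scal R_Ring C_R_ModuleSpace r z = Cmult (RtoC r) z.
Proof. destruct z as [a b]; apply injective_projections; simpl; unfold scal; simpl; unfold mult; simpl. all: ring. Qed.

Section FTC.
Definition Ejet (k0 k1 k2 k3 : R -> R) (f f1 f2 f3 : R -> C) (t : R) : C :=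
  (RtoC (k0 t) * f3 t - RtoC (k1 t) * f2 t + RtoC (k2 t) * f1 t - RtoC (k3 t) * f t)%C.

Lemma ftc4 (l u : Rbar) f f1 f2 f3 f4 (k0 k1 k2 k3 : R -> R) a x :
  C4_on l u f f1 f2 f3 f4 -> in_open_interval l u a -> in_open_interval l u x ->
  (forall t, is_derive k0 t (k1 t)) -> (forall t, is_derive k1 t (k2 t)) ->
  (forall t, is_derive k2 t (k3 t)) -> (forall t, is_derive k3 t (k0 t)) ->
  CInt (fun t => ((f4 t - f t) * RtoC (k0 t))%C) a x =
    (Ejet k0 k1 k2 k3 f f1 f2 f3 x - Ejet k0 k1 k2 k3 f f1 f2 f3 a)%C.
Proof.
  intros HC Ha Hx D0 D1 D2 D3.
  set (E := fun t => @plus C_R_NormedModule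
     (minus (@scal R_Ring C_R_ModuleSpace (k0 t) (f3 t)) (@scal R_Ring C_R_ModuleSpace (k1 t) (f2 t)))
     (minus (@scal R_Ring C_R_ModuleSpace (k2 t) (f1 t)) (@scal R_Ring C_R_ModuleSpace (k3 t) (f t)))).
  assert (HE : forall t, Ejet k0 k1 k2 k3 f f1 f2 f3 t = E t).
  { intros t. unfold Ejet, E. rewrite !scal_C.
    destruct (f t), (f1 t), (f2 t), (f3 t).
    apply injective_projections; simpl; unfold minus, plus, opp; simpl; ring. }
  rewrite !HE.
  unfold CInt. apply (@is_RInt_unique C_R_CompleteNormedModule).
  assert (Hm : forall z w : C, (z - w)%C = @minus C_R_NormedModule z w).
  { intros [p q] [r s]. apply injective_projections; simpl; unfold minus, plus, opp; simpl; ring. }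
  rewrite Hm.
  apply (@is_RInt_derive C_R_CompleteNormedModule E).
  - intros t Ht. destruct (HC t (interval_between l u a x t Ha Hx Ht)) as (F0 & F1 & F2 & F3 & _).
    eapply is_derive_eq.
    + unfold E. apply (@is_derive_plus R_AbsRing C_R_NormedModule);
        apply (@is_derive_minus R_AbsRing C_R_NormedModule).
      * apply (is_derive_scal_fct' k0 f3 t (k1 t) (f4 t)); auto.
      * apply (is_derive_scal_fct' k1 f2 t (k2 t) (f3 t)); auto.
      * apply (is_derive_scal_fct' k2 f1 t (k3 t) (f2 t)); auto.
      * apply (is_derive_scal_fct' k3 f t (k0 t) (f1 t)); auto.
    + destruct (f t), (f1 t), (f2 t), (f3 t), (f4 t).
      apply injective_projections; simpl; unfold minus, plus, opp, scal; simpl; unfold mult; simpl; ring.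
  - intros t Ht. destruct (HC t (interval_between l u a x t Ha Hx Ht)) as (F0 & F1 & F2 & F3 & F4).
    apply (continuous_ext (fun t => @scal R_Ring C_R_ModuleSpace (k0 t) (minus (f4 t) (f t)))).
    + intros y. destruct (f y), (f4 y).
      apply injective_projections; simpl; unfold minus, plus, opp, scal; simpl; unfold mult; simpl; ring.
    + apply (@continuous_scal R_UniformSpace R_AbsRing C_R_NormedModule).
      * apply (@ex_derive_continuous R_AbsRing (AbsRing_NormedModule R_AbsRing)). eexists; apply D0.
      * apply (@continuous_minus R_UniformSpace R_AbsRing C_R_NormedModule); [exact F4|]. apply (@ex_derive_continuous R_AbsRing C_R_NormedModule). eexists; exact F0.
Qed.
End FTC.
Lemma kd a (s1 s2 s3 s4 : R) :
  forall t, is_derive (fun t => s1 * sinh (a - t) + s2 * cosh (a - t) + s3 * sin (a - t) + s4 * cos (a - t)) t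
     (- s2 * sinh (a - t) - s1 * cosh (a - t) + s4 * sin (a - t) - s3 * cos (a - t)).
Proof.
  intros t. unfold sinh, cosh. auto_derive; [easy|]. unfold Rminus, Rdiv. ring.
Qed.
Lemma core_poly (hu shu cu su hv shv cv sv y0 y1 y2 y3 : R) :
  hu*hu - shu*shu = 1 -> cu*cu + su*su = 1 -> hv*hv - shv*shv = 1 -> cv*cv+sv*sv = 1 ->
  let C := hv*hu - shv*shu in let S := shv*hu - hv*shu in
  let c := cv*cu + sv*su in let s := sv*cu - cv*su in
  let A1 := (1/2)*((-shu+su)*y3 - (-hu+cu)*y2 + (-shu-su)*y1 - (-hu-cu)*y0) in
  let B1 := (1/2)*((hu-cu)*y3 - (shu+su)*y2 + (hu+cu)*y1 - (shu-su)*y0) in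
  let A2 := (1/2)*((-shv+sv)*y3 - (-hv+cv)*y2 + (-shv-sv)*y1 - (-hv-cv)*y0) in
  let B2 := (1/2)*((hv-cv)*y3 - (shv+sv)*y2 + (hv+cv)*y1 - (shv-sv)*y0) in
  (2 - 2*C*c)*y0 = A1*((C-c)*(hv-cv) - (S+s)*(shv-sv)) + B1*((C-c)*(shv-sv) - (S-s)*(hv-cv))
    + A2*((C-c)*(hu-cu) + (S+s)*(shu-su)) + B2*((C-c)*(shu-su) + (S-s)*(hu-cu)).
Proof.
intros H1 H2 H3 H4 C S c s A1 B1 A2 B2. subst C S c s A1 B1 A2 B2.
apply Rminus_diag_uniq.
transitivity (((-1)*hv*hv*y2 + (1)*hv*cv*y2 + (1)*shv*shv*y2 + (-1)*hv*hv*y0 + (1)*shv*shv*y0 + (-1)*shv*sv*y0 + (1)*hv*sv*y1 + (-1)*shv*cv*y1)*(hu*hu - shu*shu - 1) + ((-1)*hv*cv*y2 + (1)*cv*cv*y2 + (1)*sv*sv*y2 + (-1)*cv*cv*y0 + (1)*shv*sv*y0 + (-1)*sv*sv*y0 + (1)*shv*cv*y1 + (-1)*hv*sv*y1)*(cu*cu + su*su - 1)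
  + ((1)*hu*cu*y2 + (1)*hu*su*y1 + (-1)*shu*cu*y1 + (-1)*shu*su*y0 + (-1)*y2 + (-1)*y0)*(hv*hv - shv*shv - 1) + ((-1)*hu*cu*y2 + (1)*shu*cu*y1 + (-1)*hu*su*y1 + (1)*shu*su*y0 + (1)*y2 + (-1)*y0)*(cv*cv+sv*sv - 1)).
- field.
- rewrite (Rminus_diag_eq _ _ H1), (Rminus_diag_eq _ _ H2), (Rminus_diag_eq _ _ H3), (Rminus_diag_eq _ _ H4). ring.
Qed.

Lemma kd' a s1 s2 s3 s4 (k k' : R -> R) :
  (forall t, k t = s1 * sinh (a - t) + s2 * cosh (a - t) + s3 * sin (a - t) + s4 * cos (a - t)) ->
  (forall t, k' t = - s2 * sinh (a - t) - s1 * cosh (a - t) + s4 * sin (a - t) - s3 * cos (a - t)) ->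
  forall t, is_derive k t (k' t).
Proof.
  intros H H' t. rewrite H'.
  apply (is_derive_ext (fun t => s1 * sinh (a - t) + s2 * cosh (a - t) + s3 * sin (a - t) + s4 * cos (a - t))).
  - intros; now rewrite H.
  - apply kd.
Qed.

Lemma sinh_neg' u : sinh (- u) = - sinh u.
Proof. unfold sinh. rewrite Ropp_involutive. field. Qed.
Lemma cosh_neg' u : cosh (- u) = cosh u.
Proof. unfold cosh. rewrite Ropp_involutive. field. Qed.
Lemma cosh_sub v u : cosh (v - u) = cosh v * cosh u - sinh v * sinh u.
Proof. unfold cosh, sinh. unfold Rminus. rewrite !exp_plus, Ropp_plus_distr, exp_plus, Ropp_involutive.
  field. Qed.
Lemma sinh_sub v u : sinh (v - u) = sinh v * cosh u - cosh v * sinh u.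
Proof. unfold cosh, sinh. unfold Rminus. rewrite !exp_plus, Ropp_plus_distr, exp_plus, Ropp_involutive.
  field. Qed.
Lemma cosh_sinh_1 u : cosh u * cosh u - sinh u * sinh u = 1.
Proof. unfold cosh, sinh.
  assert (H : exp u * exp (- u) = 1) by (rewrite <- exp_plus, Rplus_opp_r; apply exp_0).
  nra. Qed.

Theorem mainTheorem10 (l u : Rbar) (a1 a2 : R) :
  in_open_interval l u a1 -> in_open_interval l u a2 ->
  cosh (a1 - a2) * cos (a1 - a2) <> 1 ->
  forall (f f1 f2 f3 f4 : R -> C),
  C4_on l u f f1 f2 f3 f4 ->
  forall x : R, in_open_interval l u x ->
  let d := a1 - a2 in
  let Cc := cosh d in let c := cos d in
  let S := sinh d in let s := sin d in
  let K := 2 - 2 * Cc * c in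
  let g := fun t => (f4 t - f t)%C in
  (RtoC K * f x =
     (f a1 + RtoC (1/2) * CInt (fun t => (g t * RtoC (sinh (a1 - t) - sin (a1 - t)))%C) a1 x)
       * RtoC ((Cc - c) * (cosh (x - a2) - cos (x - a2)) - (S + s) * (sinh (x - a2) - sin (x - a2)))
   + (f1 a1 + RtoC (1/2) * CInt (fun t => (g t * RtoC (cosh (a1 - t) - cos (a1 - t)))%C) a1 x)
       * RtoC ((Cc - c) * (sinh (x - a2) - sin (x - a2)) - (S - s) * (cosh (x - a2) - cos (x - a2)))
   + (f a2 + RtoC (1/2) * CInt (fun t => (g t * RtoC (sinh (a2 - t) - sin (a2 - t)))%C) a2 x)
       * RtoC ((Cc - c) * (cosh (x - a1) - cos (x - a1)) + (S + s) * (sinh (x - a1) - sin (x - a1)))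
   + (f1 a2 + RtoC (1/2) * CInt (fun t => (g t * RtoC (cosh (a2 - t) - cos (a2 - t)))%C) a2 x)
       * RtoC ((Cc - c) * (sinh (x - a1) - sin (x - a1)) + (S - s) * (cosh (x - a1) - cos (x - a1))))%C.
Proof.
  intros Ha1 Ha2 _ f f1 f2 f3 f4 HC x Hx d Cc c S s K g.
  unfold g, K, S, s, Cc, c, d. clear g K S s Cc c d.
  assert (E1 : forall a, in_open_interval l u a ->
     CInt (fun t => ((f4 t - f t) * RtoC (sinh (a - t) - sin (a - t)))%C) a x =
     (Ejet (fun t => ( sinh (a - t) - sin (a - t))%R) (fun t => ( - cosh (a - t) + cos (a - t))%R)
           (fun t => ( sinh (a - t) + sin (a - t))%R) (fun t => ( - cosh (a - t) - cos (a - t))%R)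
           f f1 f2 f3 x -
      Ejet (fun t => ( sinh (a - t) - sin (a - t))%R) (fun t => ( - cosh (a - t) + cos (a - t))%R)
           (fun t => ( sinh (a - t) + sin (a - t))%R) (fun t => ( - cosh (a - t) - cos (a - t))%R)
           f f1 f2 f3 a)%C).
  { intros a Ha. apply (ftc4 l u); auto.
    - apply (kd' a 1 0 (-1) 0); intros; ring.
    - apply (kd' a 0 (-1) 0 1); intros; ring.
    - apply (kd' a 1 0 1 0); intros; ring.
    - apply (kd' a 0 (-1) 0 (-1)); intros; ring. }
  assert (E2 : forall a, in_open_interval l u a ->
     CInt (fun t => ((f4 t - f t) * RtoC (cosh (a - t) - cos (a - t)))%C) a x =
     (Ejet (fun t => ( cosh (a - t) - cos (a - t))%R) (fun t => ( - sinh (a - t) - sin (a - t))%R)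
           (fun t => ( cosh (a - t) + cos (a - t))%R) (fun t => ( - sinh (a - t) + sin (a - t))%R)
           f f1 f2 f3 x -
      Ejet (fun t => ( cosh (a - t) - cos (a - t))%R) (fun t => ( - sinh (a - t) - sin (a - t))%R)
           (fun t => ( cosh (a - t) + cos (a - t))%R) (fun t => ( - sinh (a - t) + sin (a - t))%R)
           f f1 f2 f3 a)%C).
  { intros a Ha. apply (ftc4 l u); auto.
    - apply (kd' a 0 1 0 (-1)); intros; ring.
    - apply (kd' a (-1) 0 (-1) 0); intros; ring.
    - apply (kd' a 0 1 0 1); intros; ring.
    - apply (kd' a (-1) 0 1 0); intros; ring. }
  rewrite (E1 a1 Ha1), (E1 a2 Ha2), (E2 a1 Ha1), (E2 a2 Ha2).
  unfold Ejet. clear E1 E2.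
  rewrite !Rminus_diag, sinh_0, cosh_0, sin_0, cos_0.
  replace (a1 - x) with (- (x - a1)) by ring.
  replace (a2 - x) with (- (x - a2)) by ring.
  replace (a1 - a2) with ((x - a2) - (x - a1)) by ring.
  rewrite !sinh_neg', !cosh_neg', !sin_neg, !cos_neg, (cosh_sub (x - a2) (x - a1)), (sinh_sub (x - a2) (x - a1)), (cos_minus (x - a2) (x - a1)), (sin_minus (x - a2) (x - a1)).
  pose proof (cosh_sinh_1 (x - a1)) as H1.
  pose proof (cosh_sinh_1 (x - a2)) as H3.
  pose proof (sin2_cos2 (x - a1)) as H2.
  pose proof (sin2_cos2 (x - a2)) as H4.
  unfold Rsqr in H2, H4.
  set (hu := cosh (x - a1)) in *. set (shu := sinh (x - a1)) in *.
  set (cu := cos (x - a1)) in *. set (su := sin (x - a1)) in *.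
  set (hv := cosh (x - a2)) in *. set (shv := sinh (x - a2)) in *.
  set (cv := cos (x - a2)) in *. set (sv := sin (x - a2)) in *.
  assert (H2' : cu * cu + su * su = 1) by lra.
  assert (H4' : cv * cv + sv * sv = 1) by lra.
  destruct (f x) as [p0 q0], (f1 x) as [p1 q1], (f2 x) as [p2 q2], (f3 x) as [p3 q3].
  destruct (f a1) as [b0 c0], (f1 a1) as [b1 c1], (f2 a1) as [b2 c2], (f3 a1) as [b3 c3].
  destruct (f a2) as [e0 g0], (f1 a2) as [e1 g1], (f2 a2) as [e2 g2], (f3 a2) as [e3 g3].
  pose proof (core_poly hu shu cu su hv shv cv sv p0 p1 p2 p3 H1 H2' H3 H4') as Hp.
  pose proof (core_poly hu shu cu su hv shv cv sv q0 q1 q2 q3 H1 H2' H3 H4') as Hq.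
  cbv zeta in Hp, Hq.
  apply injective_projections; simpl.
  - lra.
  - lra.
Qed.
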